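(* The smallest cardinality of a self-binding group is at most $\mathfrak{se}$.
   Context: All groups are abelian. A group is torsionless if it embeds in $\mathbb{Z}^I$ for some set $I$. Rank means torsion-free rank. A group $G$ binds a subgroup $H$ if every homomorphism from $G$ to a free abelian group maps $H$ into a group of finite rank. A torsionless group is self-binding if it has infinite rank and binds itself. A torsionless group $G$ exhibits the Specker phenomenon if there is a sequence $(a_n)_{n\in\omega}$ of nonzero elements of $G$ such that every homomorphism $G\to\mathbb{Z}$ maps all but finitely many $a_n$ to $0$. $\mathfrak{se}$ denotes the smallest cardinality of a group exhibiting the Specker phenomenon (equivalently, the smallest cardinality of a group $G$ with $\mathbb{Z}^{(\omega)}\subseteq G\subseteq\mathbb{Z}^\omega$ such that every homomorphism $G\to\mathbb{Z}$ vanishes on all but finitely many standard unit vectors $e_n$). *)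

(* Defs.v *)
From Stdlib Require List.
From mathcomp Require Import all_boot all_order all_algebra.
Set Implicit Arguments. Unset Strict Implicit. Unset Printing Implicit Defensive.
Import GRing.Theory.
Local Open Scope ring_scope.

(* additive maps G -> Z^I, represented pointwise as G -> I -> int *)
Definition additive_fun (G : zmodType) (I : Type) (e : G -> I -> int) : Prop :=
  forall x y i, e (x + y) i = e x i + e y i.

Definition torsionless (G : zmodType) : Prop :=
  exists (I : Type) (e : G -> I -> int), additive_fun e /\ injective e.

Definition Zindep (G : zmodType) (m : nat) (x : 'I_m -> G) : Prop :=
  forall c : 'I_m -> int, \sum_(i < m) x i *~ c i = 0 -> forall i, c i = 0.

Definition Zindep_fun (J : Type) (m : nat) (v : 'I_m -> J -> int) : Prop :=
  forall c : 'I_m -> int, (forall j, \sum_(i < m) c i * v i j = 0) ->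
    forall i, c i = 0.

Definition infinite_rank (G : zmodType) : Prop :=
  forall n : nat, exists m (x : 'I_m -> G), (n < m)%N /\ Zindep x.

(* phi : G -> Z^(J) is a homomorphism into the free abelian group with basis J
   (finitely supported functions J -> Z) *)
Definition hom_to_free (G : zmodType) (J : Type) (phi : G -> J -> int) : Prop :=
  additive_fun phi /\
  forall g, exists s : list J, forall j, ~ List.In j s -> phi g j = 0.

(* G binds the subgroup H (given as a predicate): every homomorphism from G to a
   free abelian group maps H into a subgroup of finite (torsion-free) rank *)
Definition binds (G : zmodType) (H : G -> Prop) : Prop :=
  forall (J : Type) (phi : G -> J -> int), hom_to_free phi ->
    exists n : nat, forall m (x : 'I_m -> G), (forall i, H (x i)) ->
      Zindep_fun (fun i => phi (x i)) -> (m <= n)%N.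

Definition self_binding (G : zmodType) : Prop :=
  torsionless G /\ infinite_rank G /\ binds (fun _ : G => True).

Definition specker (G : zmodType) : Prop :=
  torsionless G /\
  exists a : nat -> G, (forall n, a n != 0) /\
    forall f : G -> int, (forall x y, f (x + y) = f x + f y) ->
      exists N : nat, forall n, (N <= n)%N -> f (a n) = 0.

(* Main.v *)
Require Import Defs.
From mathcomp Require Import all_boot all_order all_algebra.
From HB Require Import structures.
From mathcomp Require Import boolp classical_sets functions.
From Stdlib Require Import ClassicalEpsilon Classical.
Set Implicit Arguments. Unset Strict Implicit. Unset Printing Implicit Defensive.
Import GRing.Theory Num.Theory.
Local Open Scope ring_scope.

Definition inK (H : zmodType) (Psi : H -> nat -> int) (y : nat -> int) : Prop :=
  exists (n : nat) (h : H) (f : nat -> int) (M : nat), (0 < n)%N /\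
    (forall i, (M <= i)%N -> f i = 0) /\ forall i, y i *+ n = Psi h i + f i.

Definition Kp (H : zmodType) (Psi : H -> nat -> int) : pred (nat -> int) :=
  fun y => `[< additive_fun Psi -> inK Psi y >].

Section Add.
Variables (H : zmodType) (I : Type) (Psi : H -> I -> int).
Hypothesis aP : additive_fun Psi.
Lemma Psi0 i : Psi 0 i = 0.
Proof. have h := aP 0 0 i; rewrite addr0 in h; apply: (addIr (Psi 0 i)); by rewrite add0r -h. Qed.
Lemma PsiN h i : Psi (- h) i = - Psi h i.
Proof. by apply/eqP; rewrite -subr_eq0 opprK -aP addNr Psi0. Qed.
Lemma PsiB h k i : Psi (h - k) i = Psi h i - Psi k i.
Proof. by rewrite aP PsiN. Qed.
Lemma PsiMn h n i : Psi (h *+ n) i = Psi h i *+ n.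
Proof. by elim: n => [|n IH]; rewrite ?mulr0n ?Psi0 // !mulrS aP IH. Qed.
Lemma PsiMz h z i : Psi (h *~ z) i = Psi h i *~ z.
Proof. by case: z => n; rewrite ?NegzE ?mulrNz ?PsiN PsiMn. Qed.
End Add.

Lemma Kp_zmod (H : zmodType) (Psi : H -> nat -> int) : zmod_closed (Kp Psi).
Proof.
split.
  apply/asboolP => aP; exists 1%N, 0, (fun _ => 0), 0%N; split => //; split => // i.
  by rewrite (Psi0 aP) addr0.
move=> x y /asboolP Hx /asboolP Hy; apply/asboolP => aP.
have [n1 [h1 [f1 [M1 [n1p [f1M e1]]]]]] := Hx aP.
have [n2 [h2 [f2 [M2 [n2p [f2M e2]]]]]] := Hy aP.
exists (n1 * n2)%N, (h1 *+ n2 - h2 *+ n1), (fun i => f1 i *+ n2 - f2 i *+ n1), (maxn M1 M2).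
split; first by rewrite muln_gt0 n1p.
split.
  by move=> i; rewrite geq_max => /andP[/f1M -> /f2M ->]; rewrite !mul0rn subr0.
move=> i /=; rewrite (PsiB aP) !(PsiMn aP) mulrnBl.
rewrite mulrnA e1 mulnC mulrnA e2 !mulrnDl; rewrite addrACA opprD //.

Qed.

HB.instance Definition _ (H : zmodType) (Psi : H -> nat -> int) :=
  GRing.isZmodClosed.Build (nat -> int) (Kp Psi) (Kp_zmod Psi).

Definition Kt (H : zmodType) (Psi : H -> nat -> int) := {y : nat -> int | y \in Kp Psi}.
HB.instance Definition _ (H : zmodType) (Psi : H -> nat -> int) := [isSub for (@sval _ _ : Kt Psi -> _)].
HB.instance Definition _ (H : zmodType) (Psi : H -> nat -> int) := [Choice of Kt Psi by <:].
HB.instance Definition _ (H : zmodType) (Psi : H -> nat -> int) := [SubChoice_isSubZmodule of Kt Psi by <:].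

Lemma valD (H : zmodType) (Psi : H -> nat -> int) (x y : Kt Psi) : val (x + y) = val x + val y.
Proof. by []. Qed.

Lemma int_kernel (m L : nat) (A : 'I_m -> nat -> int) : (L < m)%N ->
  exists c : 'I_m -> int, (exists k, c k != 0) /\
    forall i, (i < L)%N -> \sum_(k < m) c k * A k i = 0.
Proof.
move=> Lm.
pose M : 'M[rat]_(m, L) := \matrix_(k, i) (A k i)%:~R.
have nz : kermx M != 0.
  rewrite -mxrank_eq0 mxrank_ker subn_eq0 -ltnNge.
  exact: leq_ltn_trans (rank_leq_col M) Lm.
have [k0 rk0] : exists k, row k (kermx M) != 0.
  apply/existsP; apply: contraR nz; rewrite negb_exists => /forallP H.
  by apply/eqP/row_matrixP => i; rewrite row0; apply/eqP; move: (H i); rewrite negbK.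
set r := row k0 (kermx M).
have rM : r *m M = 0 by rewrite /r -row_mul mulmx_ker row0.
have [j0 rj0] : exists j, r 0 j != 0.
  apply/existsP; apply: contraR rk0; rewrite negb_exists => /forallP H.
  by apply/eqP/rowP => j; move: (H j); rewrite negbK => /eqP ->; rewrite mxE.
pose D := \prod_(k < m) denq (r 0 k).
pose c k := numq (r 0 k) * \prod_(k' < m | k' != k) denq (r 0 k').
have cE k : (c k)%:~R = r 0 k * D%:~R :> rat.
  by rewrite /c /D [in RHS](bigD1 k) //= !intrM numqE mulrA.
exists c; split.
  exists j0; rewrite /c mulf_neq0 ?numq_eq0 //.
  by rewrite prodf_seq_neq0; apply/allP => k _; apply/implyP => _; rewrite denq_neq0.
move=> i iL; apply/eqP; rewrite -(intr_eq0 rat) (big_morph _ (intrD rat) (mulr0z 1)) /=.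
have := congr1 (fun X : 'rV[rat]_L => X 0 (Ordinal iL)) rM.
rewrite /= !mxE => /(congr1 (fun x => x * D%:~R)); rewrite mul0r mulr_suml => E.
apply/eqP; apply: (etrans _ E); apply: eq_bigr => k _; rewrite intrM cE !mxE.
by rewrite mulrAC.
Qed.

Section Seq.
Variables (J : Type) (v : nat -> J -> int) (pkf : nat -> nat * J)
  (sp : nat -> list J) (Lf : J -> nat).
Hypothesis pkfP : forall N, (N <= (pkf N).1)%N /\ v (pkf N).1 (pkf N).2 != 0.
Hypothesis spP : forall l j, ~ List.In j (sp l) -> v l j = 0.
Hypothesis LfP : forall j l, (Lf j <= l)%N -> v l j = 0.

Definition maxL (s : list J) : nat := foldr (fun j acc => maxn (Lf j) acc) 0%N s.
Lemma maxLP s j : List.In j s -> (Lf j <= maxL s)%N.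
Proof.
elim: s => //= x s IH [->|/IH h]; first by rewrite leq_maxl.
by rewrite (leq_trans h) // leq_maxr.
Qed.

Fixpoint stf (k : nat) : (nat * J) * list J :=
  match k with
  | 0 => (pkf 0, sp (pkf 0).1)
  | k'.+1 => let '(p, Ss) := stf k' in
     let p' := pkf (maxn (p.1).+1 (maxL Ss)) in (p', List.app Ss (sp p'.1))
  end.

Definition lk k := (stf k).1.1.
Definition jk k := (stf k).1.2.
Definition Sk k := (stf k).2.

Lemma stfS k : stf k.+1 = (pkf (maxn (lk k).+1 (maxL (Sk k))),
  List.app (Sk k) (sp (pkf (maxn (lk k).+1 (maxL (Sk k)))).1)).
Proof. by rewrite /= /lk /Sk; case: (stf k) => [[l j] S]. Qed.

Lemma L1 k : v (lk k) (jk k) != 0.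
Proof. by case: k => [|k]; rewrite /lk /jk ?stfS /=; apply: (proj2 (pkfP _)). Qed.

Lemma lkS k : (maxn (lk k).+1 (maxL (Sk k)) <= lk k.+1)%N.
Proof. by rewrite {2}/lk stfS /=; apply: (proj1 (pkfP _)). Qed.

Lemma L2 k : (k <= lk k)%N.
Proof.
elim: k => [|k IH] //; apply: leq_trans (lkS k); rewrite leq_max; apply/orP; left.
by rewrite ltnS.
Qed.

Lemma Sk_sp k j : List.In j (sp (lk k)) -> List.In j (Sk k).
Proof.
by case: k => [|k]; rewrite /Sk /lk ?stfS //= => h; apply: List.in_or_app; right.
Qed.

Lemma Sk_mono k k' j : (k <= k')%N -> List.In j (Sk k) -> List.In j (Sk k').
Proof.
move=> /subnK <-; elim: (k' - k)%N => [|d IH] // h.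
by rewrite addSn /Sk stfS /=; apply: List.in_or_app; left; apply: IH.
Qed.

Lemma L4 k k' j : (k < k')%N -> List.In j (Sk k) -> (Lf j <= lk k')%N.
Proof.
case: k' => // k' kk h; apply: leq_trans (lkS k'); rewrite leq_max; apply/orP; right.
by apply: maxLP; apply: Sk_mono h.
Qed.

Lemma in_jk k : List.In (jk k) (sp (lk k)).
Proof.
apply: NNPP => ni; have := L1 k; by rewrite spP.
Qed.

Lemma off k k' : k != k' -> v (lk k) (jk k') = 0.
Proof.
case: (ltngtP k k') => // [kk|kk] _.
  apply: spP => hin; have := L1 k'; rewrite LfP ?eqxx //.
  by apply: (L4 kk); apply: Sk_sp.
by apply: LfP; apply: (L4 kk); apply: Sk_sp; apply: in_jk.
Qed.

Lemma jk_inj k k' : jk k = jk k' -> k = k'.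
Proof.
move=> e; case: (eqVneq k k') => // ne.
by have := L1 k; rewrite e off // eqxx.
Qed.

Lemma jk_fin (s : list J) : exists M, forall k, (M <= k)%N -> ~ List.In (jk k) s.
Proof.
elim: s => [|x s [M HM]]; first by exists 0%N => k _ [].
case: (classic (exists k, jk k = x)) => [[k0 e0]|nx].
  exists (maxn M k0.+1) => k; rewrite geq_max => /andP[Mk k0k] /= [e|]; last exact: HM.
  by move: k0k; rewrite (jk_inj (etrans e0 e)) ltnn.
exists M => k Mk /= [e|]; last exact: HM.
by apply: nx; exists k.
Qed.

End Seq.

Definition addf (G : zmodType) (f : G -> int) := forall x y, f (x + y) = f x + f y.

Lemma additive_sum (G : zmodType) (I : Type) (e : G -> I -> int) :
  additive_fun e -> forall m (F : 'I_m -> G) j,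
  e (\sum_(i < m) F i) j = \sum_(i < m) e (F i) j.
Proof.
move=> aP; elim=> [|m IH] F j; first by rewrite !big_ord0 (Psi0 aP).
by rewrite !big_ord_recr /= aP IH.
Qed.

Section KSec.
Variables (H : zmodType) (a : nat -> H) (nn : nat -> nat) (gg : nat -> H -> int).
Hypothesis gadd : forall k, addf (gg k).
Hypothesis nnge : forall l, (l <= nn l)%N.
Hypothesis gdiag0 : forall k l, k != l -> gg k (a (nn l)) = 0.
Hypothesis gdiag1 : forall l, gg l (a (nn l)) != 0.
Hypothesis spec : forall f : H -> int, addf f ->
  exists N : nat, forall n, (N <= n)%N -> f (a n) = 0.

Definition Psi (h : H) (i : nat) : int := gg i h *+ i`!.
Lemma Psi_add : additive_fun Psi.
Proof. by move=> x y i; rewrite /Psi gadd mulrnDl. Qed.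

Local Notation K := (Kt Psi).

Lemma inKP (y : K) : inK Psi (val y).
Proof. by have /asboolP := valP y; apply; exact: Psi_add. Qed.

Lemma Kmem y : inK Psi y -> y \in Kp Psi.
Proof. by move=> h; apply/asboolP. Qed.

Definition cK (x : K) (i : nat) : int := val x i.
Lemma cK_add : additive_fun cK.
Proof. by []. Qed.
Lemma cK_inj : injective cK.
Proof. by move=> x y /= e; apply: val_inj. Qed.

Definition ev (i : nat) : nat -> int := fun j => if j == i then 1 else 0.
Lemma ev_in i : ev i \in Kp Psi.
Proof.
apply: Kmem; exists 1%N, 0, (ev i), i.+1; split => //; split.
  by move=> j; rewrite /ev; case: eqP => // ->; rewrite ltnn.
by move=> j; rewrite (Psi0 Psi_add) add0r.
Qed.
Definition eK i : K := Sub (ev i) (ev_in i).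

Lemma Psi_in h : Psi h \in Kp Psi.
Proof.
apply: Kmem; exists 1%N, h, (fun _ => 0), 0%N; split => //; split => //.
by move=> j; rewrite addr0.
Qed.
Definition PsiK h : K := Sub (Psi h) (Psi_in h).

Lemma PsiK_add : forall x y, PsiK (x + y) = PsiK x + PsiK y.
Proof. by move=> x y; apply: cK_inj; apply: funext => i; rewrite /cK /= Psi_add. Qed.

Definition dd l : int := gg l (a (nn l)) *+ l`!.
Lemma dd_neq0 l : dd l != 0.
Proof. by rewrite /dd -mulr_natr mulf_neq0 // pnatr_eq0 -lt0n fact_gt0. Qed.

Lemma PsiK_a l : PsiK (a (nn l)) = eK l *~ dd l.
Proof.
apply: cK_inj; apply: funext => i; rewrite (PsiMz cK_add) /cK /= /Psi /ev /dd.
case: eqP => [->|/eqP ne]; first by rewrite intz.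
by rewrite gdiag0 // mul0rz mul0rn.
Qed.

Lemma cK_sum m (F : 'I_m -> K) i : cK (\sum_(k < m) F k) i = \sum_(k < m) cK (F k) i.
Proof. exact: (additive_sum cK_add). Qed.

Lemma fin_decomp (y : K) N : (forall i, (N <= i)%N -> cK y i = 0) ->
  y = \sum_(i < N) eK i *~ cK y i.
Proof.
move=> yN; apply: cK_inj; apply: funext => j; rewrite cK_sum.
under eq_bigr => i _ do rewrite (PsiMz cK_add) /cK /= /ev.
case: (ltnP j N) => [jN|jN].
  rewrite (bigD1 (Ordinal jN)) //= eqxx intz big1 ?addr0 // => i /eqP ne.
  case: eqP => [e|_]; last by rewrite mul0rz.
  by case: ne; apply: val_inj; rewrite /= -e.
rewrite yN // big1 // => i _; case: eqP => [e|_]; last by rewrite mul0rz.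
by move: (ltn_ord i); rewrite -e ltnNge jN.
Qed.


Lemma mulrn_inj (x y : int) n : (0 < n)%N -> x *+ n = y *+ n -> x = y.
Proof.
move=> n0; rewrite -(mulr_natr x) -(mulr_natr y) => /mulIf; apply.
by rewrite pnatr_eq0 -lt0n.
Qed.


Lemma K_tail_div (y : K) (m : nat) : (0 < m)%N ->
  exists n h M, (0 < n)%N /\ forall i, (M <= i)%N ->
    (Posz m %| cK y i)%Z /\ cK y i *+ n = Psi h i.
Proof.
move=> m0; have [n [h [f [M [n0 [fM e]]]]]] := inKP y.
exists n, h, (maxn M (n * m)); split => // i; rewrite geq_max => /andP[/fM fi nmi].
have := e i; rewrite fi addr0 => ei; split => //.
move: ei; rewrite /Psi.
have /dvdnP[q iq] : (n * m %| i`!)%N by apply: dvdn_fact; rewrite muln_gt0 n0 m0.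
rewrite iq (mulnC n) mulnA mulrnA => /mulrn_inj -/(_ n0); rewrite /cK => ->.
by rewrite mulrnA -mulr_natr natz dvdz_mull // dvdzz.
Qed.


Lemma K_divide (y : K) (m : nat) : (0 < m)%N ->
  exists z : K, forall i,
    cK z i = if (Posz m %| cK y i)%Z then (cK y i %/ Posz m)%Z else 0.
Proof.
move=> m0; have [n [h [M [n0 HM]]]] := K_tail_div y m0.
pose zf i := if (Posz m %| cK y i)%Z then (cK y i %/ Posz m)%Z else 0.
have zin : zf \in Kp Psi.
  apply: Kmem; exists (n * m)%N, h, (fun i => zf i *+ (n * m) - Psi h i), M.
  split; first by rewrite muln_gt0 n0.
  split; last by move=> i; rewrite addrC subrK.
  move=> i /HM [dv e]; rewrite /zf dv (mulnC n) mulrnA -(mulr_natr _ m) natz divzK //.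
  by rewrite e subrr.
by exists (Sub zf zin).
Qed.


Lemma cKB (x y : K) i : cK (x - y) i = cK x i - cK y i.
Proof. exact: (PsiB cK_add). Qed.
Lemma cKMz (x : K) z i : cK (x *~ z) i = cK x i *~ z.
Proof. exact: (PsiMz cK_add). Qed.

Lemma tail_zero (J : Type) (phi : K -> J -> int) (pa : additive_fun phi) L
  (HL : forall l, (L <= l)%N -> forall j, phi (eK l) j = 0) (y : K)
  (yL : forall i, (i < L)%N -> cK y i = 0) j : phi y j = 0.
Proof.
set v := phi y j; set m := (absz v).+1.
have m0 : (0 < m)%N by [].
have [z hz] := K_divide y m0.
have [n [h [M [n0 HM]]]] := K_tail_div y m0.
set w := y - z *~ (Posz m).
have cw i : (Posz m %| cK y i)%Z -> cK w i = 0.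
  by move=> dv; rewrite cKB cKMz hz dv mulrzz divzK // subrr.
have wdec : w = \sum_(i < M) eK i *~ cK w i.
  by apply: fin_decomp => i /HM [dv _]; exact: cw.
have phw : phi w j = 0.
  rewrite wdec (additive_sum pa) big1 // => i _; rewrite (PsiMz pa).
  case: (ltnP i L) => [iL|iL]; last by rewrite HL // mul0rz.
  by rewrite cw ?mulr0z // yL // dvdz0.
have : v = phi z j * Posz m.
  by rewrite /v -(subrK (z *~ Posz m) y) pa -/w phw add0r (PsiMz pa) mulrzz.
move=> /(congr1 absz); rewrite abszM /=.
case: (absz (phi z j)) => [|k]; first by rewrite mul0n => /eqP; rewrite absz_eq0 => /eqP.
by rewrite mulSn => e; move: (leq_addr (k * m) m); rewrite -e /m ltnn.
Qed.


Lemma cK_sumev N (c : nat -> int) i :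
  cK (\sum_(k < N) eK k *~ c k) i = if (i < N)%N then c i else 0.
Proof.
rewrite cK_sum; under eq_bigr => k _ do rewrite cKMz /cK /= /ev.
case: (ltnP i N) => [iN|iN].
  rewrite (bigD1 (Ordinal iN)) //= eqxx intz big1 ?addr0 // => k /eqP ne.
  case: eqP => [e|_]; last by rewrite mul0rz.
  by case: ne; apply: val_inj; rewrite /= -e.
rewrite big1 // => k _; case: eqP => [e|_]; last by rewrite mul0rz.
by move: (ltn_ord k); rewrite -e ltnNge iN.
Qed.

Lemma decomp (J : Type) (phi : K -> J -> int) (pa : additive_fun phi) L
  (HL : forall l, (L <= l)%N -> forall j, phi (eK l) j = 0) (y : K) j :
  phi y j = \sum_(i < L) cK y i * phi (eK i) j.
Proof.
have yL : forall i, (i < L)%N -> cK (y - \sum_(i < L) eK i *~ cK y i) i = 0.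
  by move=> i iL; rewrite cKB cK_sumev iL subrr.
have := tail_zero pa HL yL j.
rewrite (PsiB pa) (additive_sum pa) => /eqP.
  rewrite subr_eq0 => /eqP ->; apply: eq_bigr => i _.
  by rewrite (PsiMz pa) mulrzz mulrC.
Qed.


Lemma unif (J : Type) (phi : K -> J -> int) (hp : hom_to_free phi) :
  exists L, forall l, (L <= l)%N -> forall j, phi (eK l) j = 0.
Proof.
have pa := proj1 hp.
have Lj : forall j, exists N, forall l, (N <= l)%N -> phi (eK l) j = 0.
  move=> j; have fa : addf (fun h => phi (PsiK h) j) by move=> x y; rewrite PsiK_add pa.
  have [N HN] := spec fa; exists N => l Nl.
  have := HN _ (leq_trans Nl (nnge l)); rewrite /= PsiK_a (PsiMz pa) => /eqP.
  by rewrite mulrzz mulf_eq0 (negbTE (dd_neq0 l)) orbF => /eqP.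
pose Lf j := proj1_sig (constructive_indefinite_description _ (Lj j)).
have LfP : forall j l, (Lf j <= l)%N -> phi (eK l) j = 0.
  by move=> j; apply: (proj2_sig (constructive_indefinite_description _ (Lj j))).
pose sp l := proj1_sig (constructive_indefinite_description _ (proj2 hp (eK l))).
have spP : forall l j, ~ List.In j (sp l) -> phi (eK l) j = 0.
  by move=> l; apply: (proj2_sig (constructive_indefinite_description _ (proj2 hp (eK l)))).
apply: NNPP => nL.
have pk : forall N, exists p : nat * J, (N <= p.1)%N /\ phi (eK p.1) p.2 != 0.
  move=> N; apply: NNPP => np; apply: nL; exists N => l Nl j; apply: NNPP => ne.
  by apply: np; exists (l, j); split => //; apply/eqP.
pose pkf N := proj1_sig (constructive_indefinite_description _ (pk N)).
have pkfP : forall N, (N <= (pkf N).1)%N /\ phi (eK (pkf N).1) (pkf N).2 != 0.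
  by move=> N; apply: (proj2_sig (constructive_indefinite_description _ (pk N))).
pose v l j := phi (eK l) j.
pose jk := jk pkf sp Lf; pose lk := lk pkf sp Lf.
have fin : forall h, exists M, forall k, (M <= k)%N -> phi (PsiK h) (jk k) = 0.
  move=> h; have [s hs] := proj2 hp (PsiK h).
  have [M HM] := jk_fin (v := v) pkfP spP LfP s.
  by exists M => k Mk; apply: hs; apply: HM.
pose Mh h := proj1_sig (constructive_indefinite_description _ (fin h)).
have MhP : forall h k, (Mh h <= k)%N -> phi (PsiK h) (jk k) = 0.
  by move=> h; apply: (proj2_sig (constructive_indefinite_description _ (fin h))).
pose F h := \sum_(0 <= k < Mh h) phi (PsiK h) (jk k).
have FE : forall h M, (Mh h <= M)%N -> F h = \sum_(0 <= k < M) phi (PsiK h) (jk k).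
  move=> h M hM; rewrite /F (big_cat_nat (leq0n (Mh h)) hM) /=.
  rewrite [X in _ = _ + X]big1_seq ?addr0 // => k /andP[_]; rewrite mem_index_iota.
  by move=> /andP[hk _]; apply: MhP.
have Fa : addf F.
  move=> x y; set M := maxn (Mh (x + y)) (maxn (Mh x) (Mh y)).
  rewrite (FE (x + y) M) ?leq_maxl // (FE x M); last by rewrite !leq_max leqnn orbT.
  rewrite (FE y M); last by rewrite !leq_max leqnn !orbT.
  by rewrite -big_split /=; apply: eq_bigr => k _; rewrite PsiK_add pa.
have [N HN] := spec Fa.
set l := lk N.
have := HN (nn l) (leq_trans (L2 (v := v) sp Lf pkfP N) (nnge l)).
rewrite (FE _ (maxn (Mh (a (nn l))) N.+1)) ?leq_maxl //.
rewrite (bigD1_seq N) /=; last by rewrite iota_uniq.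
  2: by rewrite mem_index_iota leq0n /= leq_max ltnSn orbT.
rewrite big1 ?addr0.
  rewrite PsiK_a (PsiMz pa) => /eqP; rewrite mulrzz mulf_eq0 (negbTE (dd_neq0 l)) orbF.
  by move/eqP; apply/eqP; apply: (L1 (v := v) sp Lf pkfP).
move=> k nk; rewrite PsiK_a (PsiMz pa).
have e : phi (eK l) (jk k) = 0.
  by apply: (off (v := v) pkfP spP LfP); rewrite eq_sym.
by rewrite e mul0rz.
Qed.


Lemma K_self_binding : self_binding K.
Proof.
split.
  by exists nat, cK; split; [exact: cK_add | exact: cK_inj].
split.
  move=> n; exists n.+1, (fun i : 'I_n.+1 => eK i); split => // c hc i.
  have := congr1 (fun x => cK x i) hc; rewrite /= cK_sum.
  rewrite (bigD1 i) //= big1 ?addr0.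
    by rewrite cKMz /cK /= /ev eqxx intz => ->.
  move=> k /eqP ne; rewrite cKMz /cK /= /ev; case: eqP => [e|_]; last by rewrite mul0rz.
  by case: ne; apply: val_inj; rewrite /= e.
move=> J phi hp; have pa := proj1 hp; have [L HL] := unif hp.
exists L => m x _ ind; rewrite leqNgt; apply/negP => Lm.
have [c [[k ck] hc]] := int_kernel (fun k i => cK (x k) i) Lm.
move: ck; rewrite (ind c) ?eqxx // => j.
under eq_bigr => k' _ do rewrite (decomp pa HL) mulr_sumr.
rewrite exchange_big /=; apply: big1 => i _.
under eq_bigr => k' _ do rewrite mulrA.
by rewrite -mulr_suml hc ?mul0r.
Qed.

End KSec.

Lemma enc_inj (H : zmodType) (Psi : H -> nat -> int) (aP : additive_fun Psi) :
  exists e : Kt Psi -> nat * H, injective e.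
Proof.
have ex : forall y : Kt Psi, exists p : nat * H * (nat -> int) * nat,
    (0 < p.1.1.1)%N /\ (forall i, (p.2 <= i)%N -> p.1.2 i = 0) /\
    forall i, val y i *+ p.1.1.1 = Psi p.1.1.2 i + p.1.2 i.
  move=> y; have /asboolP := valP y; move=> /(_ aP) [n [h [f [M [n0 [fM e]]]]]].
  by exists (n, h, f, M).
pose ch y := proj1_sig (constructive_indefinite_description _ (ex y)).
have chP : forall y, (0 < (ch y).1.1.1)%N /\ (forall i, ((ch y).2 <= i)%N -> (ch y).1.2 i = 0) /\
    forall i, val y i *+ (ch y).1.1.1 = Psi (ch y).1.1.2 i + (ch y).1.2 i.
  by move=> y; apply: (proj2_sig (constructive_indefinite_description _ (ex y))).
exists (fun y => (pickle ((ch y).1.1.1, map (ch y).1.2 (iota 0 (ch y).2)), (ch y).1.1.2)).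
move=> y y' [/(pcan_inj pickleK) [en el] eh].
move: (chP y) (chP y') en el eh.
case: (ch y) => [[[n h] f] M]; case: (ch y') => [[[n' h'] f'] M'] /=.
move=> [n0 [fM e]] [_ [fM' e']] en el eh; subst n' h'.
have MM : M = M' by have := congr1 size el; rewrite !size_map !size_iota.
move: el fM'; rewrite -MM => el fM'.
have ff : forall i, f i = f' i.
  move=> i; case: (ltnP i M) => iM; last by rewrite fM // fM'.
  have := congr1 (nth 0 ^~ i) el; rewrite !(nth_map 0%N) ?size_iota //.
  by rewrite nth_iota.
apply: val_inj; apply: funext => i; apply: (mulrn_inj n0).
by rewrite e e' ff.
Qed.

Lemma pair_inj (H : zmodType) (g : H -> int) (ga : forall x y, g (x + y) = g x + g y)
  (x0 : H) : g x0 != 0 -> exists f : nat * H -> H, injective f.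
Proof.
move=> gx0.
have g0 : g 0 = 0 by apply: (addIr (g 0)); rewrite add0r -ga addr0.
have gN : forall x, g (- x) = - g x.
  by move=> x; apply/eqP; rewrite -subr_eq0 opprK -ga addNr g0.
have gMz : forall x z, g (x *~ z) = g x * z.
  have gMn : forall x n, g (x *+ n) = g x *+ n.
    move=> x; elim=> [|n IH]; last by rewrite !mulrS ga IH.
    by rewrite !mulr0n g0.
  by move=> x [] n; rewrite ?NegzE ?mulrNz ?gN gMn -mulrzz ?mulrNz.
pose P c := (0 < c)%N && `[< exists u, g u = Posz c >].
have exP : exists c, P c.
  exists (absz (g x0)); apply/andP; split; first by rewrite absz_gt0.
  apply/asboolP; case: (ltrP (g x0) 0) => hs.
    by exists (- x0); rewrite gN abszE ltr0_norm.
  by exists x0; rewrite abszE ger0_norm.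
pose c := ex_minn exP.
have [Pc cmin] : P c /\ forall c', P c' -> (c <= c')%N.
  by rewrite /c; case: ex_minnP => m Pm mm; split.
move: Pc => /andP[c0 /asboolP [u gu]].
have cz : Posz c != 0 by apply/eqP => -[] e; move: c0; rewrite e.
have dv : forall h, g h = (g h %/ c)%Z * c.
  move=> h; have := divz_eq (g h) c; set r := (g h %% c)%Z => E.
  suff r0 : r = 0 by rewrite {1}E r0 addr0.
  have r0 : 0 <= r by rewrite modz_ge0.
  have rc : r < Posz c by rewrite ltz_pmod // ltz_nat.
  apply/eqP; apply: contraT => rn0.
  have Pr : P (absz r).
    apply/andP; split; first by rewrite absz_gt0.
    apply/asboolP; exists (h - u *~ (g h %/ c)%Z).
    by rewrite ga gN gMz gu {1}E gez0_abs // (mulrC (Posz c)) addrAC subrr add0r.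
  by move: (cmin _ Pr); rewrite leqNgt -ltz_nat gez0_abs // rc.
pose q h := (g h %/ c)%Z.
exists (fun p => p.2 - u *~ q p.2 + u *~ Posz (pickle (p.1, q p.2))).
have qf : forall p : nat * H, q (p.2 - u *~ q p.2 + u *~ Posz (pickle (p.1, q p.2))) = Posz (pickle (p.1, q p.2)).
  move=> p; apply: (mulIf cz).
  by rewrite -dv !ga gN !gMz gu [in g p.2]dv mulrC subrr add0r mulrC.
move=> [n h] [n' h'] /= E.
have := qf (n, h); rewrite /= E (qf (n', h')) /= => /eqP; rewrite eqz_nat => /eqP /(pcan_inj pickleK) [en eq]; subst n'.
by move: E; rewrite eq => /addIr /addIr ->.
Qed.

Definition upd (T : Type) (f : nat -> T) k v := fun i => if i == k then v else f i.

Section Diag.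
Variables (H : zmodType) (a : nat -> H).
Hypothesis tl : torsionless H.
Hypothesis anz : forall n, a n != 0.
Hypothesis spec : forall f : H -> int, addf f ->
  exists N : nat, forall n, (N <= n)%N -> f (a n) = 0.

Lemma rawf (x : H) : x != 0 -> exists g, addf g /\ g x != 0.
Proof.
move=> xn; have [I [e [ea ei]]] := tl.
have : exists i, e x i != 0.
  apply: NNPP => ne; move/eqP: xn; apply; apply: ei; apply: boolp.funext => i.
  rewrite (Psi0 ea); apply: NNPP => ne2; apply: ne; exists i; exact/eqP.
by move=> [i hi]; exists (fun h => e h i); split => // y z; rewrite ea.
Qed.

Definition valid k (n : nat -> nat) (g : nat -> H -> int) :=
  (forall i, (i < k)%N -> [/\ addf (g i), (i <= n i)%N & g i (a (n i)) != 0]) /\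
  (forall i j, (i < k)%N -> (j < k)%N -> i != j -> g i (a (n j)) = 0).

Fixpoint R (n : nat -> nat) (g : nat -> H -> int) (g0 : H -> int) k : H -> int :=
  match k with
  | 0 => g0
  | k'.+1 => fun h => g k' (a (n k')) * R n g g0 k' h - R n g g0 k' (a (n k')) * g k' h
  end.

Lemma R_add n g g0 k : (forall i, (i < k)%N -> addf (g i)) -> addf g0 -> addf (R n g g0 k).
Proof.
move=> ga g0a; elim: k ga => [|k IH] ga //= x y.
rewrite IH; last by move=> i ik; apply: ga; apply: ltnW.
by rewrite (ga k) // mulrDr mulrDr opprD addrACA.
Qed.

Lemma R_kill k n g g0 : valid k n g -> forall k', (k' <= k)%N ->
  forall i, (i < k')%N -> R n g g0 k' (a (n i)) = 0.
Proof.
move=> [v1 v2]; elim=> [|k' IH] // k'k i; rewrite ltnS leq_eqVlt => /orP[/eqP ->|ik] /=.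
  by rewrite mulrC subrr.
rewrite IH ?(ltnW k'k) // mulr0 add0r v2 ?mulr0 ?oppr0 //; first exact: ltn_trans k'k.
by rewrite neq_ltn ik orbT.
Qed.

Lemma R_val n g g0 k x : (forall i, (i < k)%N -> g i x = 0) ->
  R n g g0 k x = (\prod_(i < k) g i (a (n i))) * g0 x.
Proof.
elim: k => [|k IH] h /=; first by rewrite big_ord0 mul1r.
rewrite h // mulr0 subr0 IH; last by move=> i ik; apply: h; apply: ltnW.
by rewrite big_ord_recr /= mulrA [g k _ * _]mulrC.
Qed.

Lemma Nall k (g : nat -> H -> int) : (forall i, (i < k)%N -> addf (g i)) ->
  exists N, forall i m, (i < k)%N -> (N <= m)%N -> g i (a m) = 0.
Proof.
elim: k => [|k IH] ga; first by exists 0%N.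
have [N1 H1] := IH (fun i ik => ga i (ltnW ik)).
have [N2 H2] := spec (ga k (ltnSn k)).
exists (maxn N1 N2) => i m; rewrite ltnS leq_eqVlt geq_max => /orP[/eqP ->|ik] /andP[m1 m2].
  exact: H2.
exact: H1.
Qed.

Lemma extend k n g : valid k n g ->
  exists p : nat * (H -> int), valid k.+1 (upd n k p.1) (upd g k p.2).
Proof.
move=> [v1 v2].
have [N HN] := Nall (g := g) (fun i ik => (let: And3 x _ _ := v1 i ik in x)).
set m := maxn k N.
have [g0 [g0a g0m]] := rawf (anz m).
exists (m, R n g g0 k); rewrite /upd /=; split.
  move=> i; rewrite ltnS leq_eqVlt => /orP[/eqP ->|ik].
    rewrite eqxx; split; first by apply: R_add => // i0 i0k; case: (v1 i0 i0k).
      by rewrite leq_maxl.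
    rewrite R_val; last by move=> i0 i0k; apply: HN => //; rewrite leq_maxr.
    rewrite mulf_neq0 //; apply/prodf_neq0 => i0 _; by case: (v1 i0 (ltn_ord i0)).
  by rewrite (ltn_eqF ik); apply: v1.
move=> i j; rewrite ltnS leq_eqVlt => /orP[/eqP ->|ik]; rewrite ltnS leq_eqVlt => /orP[/eqP ->|jk].
- by rewrite eqxx.
- rewrite eqxx (ltn_eqF jk) => _.
  exact: (@R_kill k n g _ (conj v1 v2) k (leqnn k) j jk).
- rewrite eqxx (ltn_eqF ik) => _.
  by apply: HN => //; rewrite leq_maxr.
- by rewrite (ltn_eqF ik) (ltn_eqF jk); apply: v2.
Qed.


Definition inh : inhabited (nat * (H -> int)) := inhabits (0%N, fun _ => 0).

Fixpoint st k : (nat -> nat) * (nat -> H -> int) :=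
  match k with
  | 0 => (fun _ => 0%N, fun _ _ => 0)
  | k'.+1 => let s := st k' in
     let p := epsilon inh (fun p => valid k'.+1 (upd s.1 k' p.1) (upd s.2 k' p.2)) in
     (upd s.1 k' p.1, upd s.2 k' p.2)
  end.

Lemma st_valid k : valid k (st k).1 (st k).2.
Proof.
elim: k => [|k IH]; first by split.
exact: (epsilon_spec inh _ (extend IH)).
Qed.

Lemma st_stable i d : (st (i.+1 + d)).1 i = (st i.+1).1 i /\ (st (i.+1 + d)).2 i = (st i.+1).2 i.
Proof.
elim: d => [|d [IH1 IH2]]; first by rewrite addn0.
rewrite addnS /= /upd.
have -> : (i == i.+1 + d)%N = false by rewrite eqn_leq andbC leqNgt addSn ltnS leq_addr.
by [].
Qed.

Lemma diag_exists : exists (nn : nat -> nat) (gg : nat -> H -> int),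
  [/\ forall k, addf (gg k), forall l, (l <= nn l)%N,
      forall k l, k != l -> gg k (a (nn l)) = 0 & forall l, gg l (a (nn l)) != 0].
Proof.
exists (fun i => (st i.+1).1 i), (fun i => (st i.+1).2 i).
have E : forall i K, (i < K)%N -> (st K).1 i = (st i.+1).1 i /\ (st K).2 i = (st i.+1).2 i.
  by move=> i K iK; rewrite -(subnKC iK); apply: st_stable.
have V1 : forall i, [/\ addf ((st i.+1).2 i), (i <= (st i.+1).1 i)%N &
     (st i.+1).2 i (a ((st i.+1).1 i)) != 0].
  by move=> i; case: (st_valid i.+1) => v1 _; apply: v1.
split.
- by move=> k; case: (V1 k).
- by move=> l; case: (V1 l).
- move=> k l kl; have [_ v2] := st_valid (maxn k l).+1.
  have kK : (k < (maxn k l).+1)%N by rewrite ltnS leq_maxl.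
  have lK : (l < (maxn k l).+1)%N by rewrite ltnS leq_maxr.
  by have := v2 k l kK lK kl; rewrite (proj1 (E l _ lK)) (proj2 (E k _ kK)).
- by move=> l; case: (V1 l).
Qed.

End Diag.

Theorem theorem7 (H : zmodType) :
  specker H -> exists G : zmodType, self_binding G /\ exists f : G -> H, injective f.
Proof.
move=> [tl [a [anz sp]]].
have [nn [gg [ga nng gd0 gd1]]] := diag_exists tl anz sp.
exists (Kt (Psi gg)); split; first exact: (K_self_binding ga nng gd0 gd1 sp).
have [e ei] := enc_inj (Psi_add ga).
have [p pi] := pair_inj (ga 0) (gd1 0).
by exists (p \o e); apply: inj_comp.
Qed.
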